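(* For every $n\geq 0$, $$S_1(n)=10^{n},\qquad S_2(n)=\frac{35\cdot 36^{n}-2\cdot 3^{n}}{33},\qquad S_3(n)=\frac{25\cdot 136^{n}-4\cdot 10^{n}}{21}.$$
   Context: The Stern polynomials $B_n(t)\in\mathbb{Z}[t]$ are defined by $B_0(t)=0$, $B_1(t)=1$, and for $n\geq 1$: $B_{2n}(t)=tB_n(t)$, $B_{2n+1}(t)=B_n(t)+B_{n+1}(t)$. For $n\geq1$ let $e(n)=\deg B_n(t)$. For $k,n\geq 0$ let $S_k(n)=\sum_{a\geq 1:\;e(a)=n}a^{k}$ (a finite sum over the positive integers $a$ with $e(a)=n$). *)

(* Defs.v *)
From HB Require Import structures.
From mathcomp Require Import all_boot all_order all_algebra.
Set Implicit Arguments. Unset Strict Implicit. Unset Printing Implicit Defensive.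
Import Order.TTheory GRing.Theory Num.Theory.

Local Open Scope ring_scope.

Fixpoint stern_fuel (fuel n : nat) : {poly int} :=
  match fuel with
  | 0%N => 0
  | f.+1 =>
      if n == 0%N then 0
      else if n == 1%N then 1
      else if odd n then stern_fuel f n./2 + stern_fuel f n./2.+1
      else 'X * stern_fuel f n./2
  end.

(* fuel n.+1 is always enough *)
Definition stern (n : nat) : {poly int} := stern_fuel n.+1 n.

(* e(n) = deg B_n (for n >= 1; B_n <> 0 then) *)
Definition e (n : nat) : nat := (size (stern n)).-1.

Local Close Scope ring_scope.
(* Finiteness is witnessed by a bound N with every such a below N; the value
   of the sum over [1, N) does not depend on the choice of such N. *)
Definition S_is (k n : nat) (v : nat) : Prop :=
  exists N : nat,
    (forall a : nat, (0 < a)%N -> e a = n -> (a < N)%N) /\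
    (\sum_(1 <= a < N | e a == n) a ^ k)%N = v.

(* Main.v *)
Require Import Defs.
From HB Require Import structures.
From mathcomp Require Import all_boot all_order all_algebra.
From mathcomp Require Import zify.
Import Order.TTheory GRing.Theory Num.Theory.

Lemma stern_fuelE f g n : (n < f)%N -> (n < g)%N -> stern_fuel f n = stern_fuel g n.
Proof.
elim: f g n => [|f IH] [|g] n //= hf hg.
case: ifP => // /eqP n0; case: ifP => // /eqP n1.
have hn := odd_double_half n; rewrite -muln2 in hn.
case: ifP => ho; rewrite ho /= in hn.
- by rewrite (IH g n./2) ?(IH g n./2.+1) //; lia.
- by rewrite (IH g n./2) //; lia.
Qed.

Lemma stern_rec n : (1 < n)%N -> stern n =
  if odd n then (stern n./2 + stern n./2.+1)%R else ('X * stern n./2)%R.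
Proof.
move=> n1; have hn := odd_double_half n; rewrite -muln2 in hn.
rewrite /stern /=.
have -> : (n == 0%N) = false by apply/eqP; lia.
have -> : (n == 1%N) = false by apply/eqP; lia.
case: ifP => ho; rewrite ho /= in hn.
- by rewrite (@stern_fuelE _ n./2.+1 n./2) ?(@stern_fuelE _ n./2.+2 n./2.+1) //; lia.
- by rewrite (@stern_fuelE _ n./2.+1 n./2) //; lia.
Qed.

Lemma stern1 : stern 1 = 1%R.
Proof. by []. Qed.

Lemma stern_double m : (0 < m)%N -> stern m.*2 = ('X * stern m)%R.
Proof.
move=> m0; rewrite stern_rec ?odd_double ?doubleK //; rewrite -muln2; lia.
Qed.

Lemma stern_odd m : (0 < m)%N -> stern m.*2.+1 = (stern m + stern m.+1)%R.
Proof.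
move=> m0; rewrite stern_rec /= ?odd_double /= ?uphalf_double //.
rewrite -muln2; lia.
Qed.

Local Open Scope ring_scope.

Lemma lcD (p q : {poly int}) : 0 < lead_coef p -> 0 < lead_coef q ->
  0 < lead_coef (p + q) /\ size (p + q) = maxn (size p) (size q).
Proof.
move=> hp hq.
case: (ltngtP (size p) (size q)) => h.
- by rewrite lead_coefDr // addrC size_polyDl // (maxn_idPr (ltnW h)).
- by rewrite lead_coefDl // size_polyDl // (maxn_idPl (ltnW h)).
- have s0 : (0 < size p)%N.
    rewrite size_poly_gt0; apply/eqP => p0; move: hp; by rewrite p0 lead_coef0.
  have hc : (p + q)`_(size p).-1 = lead_coef p + lead_coef q.
    by rewrite coefD !lead_coefE h.
  have hs : size (p + q) = size p.
    apply/eqP; rewrite eqn_leq; apply/andP; split.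
      by have := size_polyD p q; rewrite -h maxnn.
    rewrite leqNgt; apply/negP => hlt.
    have : (p + q)`_(size p).-1 = 0.
      have hle : (size (p+q)%R <= (size p).-1)%N by lia.
      by move/leq_sizeP: hle; apply.
    rewrite hc => e0; move: (addr_gt0 hp hq); by rewrite e0 ltxx.
  split; first by rewrite lead_coefE hs hc addr_gt0.
  by rewrite hs h.
Qed.

Lemma stern_pos n : (0 < n)%N -> 0 < lead_coef (stern n).
Proof.
elim/ltn_ind: n => n IH n0.
case: (ltngtP n 1) => h; first lia.
- have hn := odd_double_half n; rewrite -muln2 in hn.
  rewrite stern_rec //; case: ifP => ho; rewrite ho /= in hn.
  + have h1 := IH n./2 ltac:(lia) ltac:(lia).
    have h2 := IH n./2.+1 ltac:(lia) ltac:(lia).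
    by case: (lcD _ _ h1 h2).
  + by rewrite mulrC lead_coefMX; apply: IH; lia.
- by rewrite h stern1 lead_coef1 ltr01.
Qed.

Lemma size_stern n : (0 < n)%N -> (0 < size (stern n))%N.
Proof.
move=> n0; rewrite size_poly_gt0; apply/eqP => h.
by move: (@stern_pos n n0); rewrite h lead_coef0 ltxx.
Qed.

Local Close Scope ring_scope.

Lemma e1 : e 1 = 0.
Proof. by rewrite /e stern1 size_poly1. Qed.

Lemma e_double m : 0 < m -> e m.*2 = (e m).+1.
Proof.
move=> m0; rewrite /e stern_double // mulrC size_mulX.
  have := @size_stern m m0; lia.
apply/eqP => h; by move: (@stern_pos m m0); rewrite h lead_coef0 ltxx.
Qed.

Lemma e_odd m : 0 < m -> e m.*2.+1 = maxn (e m) (e m.+1).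
Proof.
move=> m0; rewrite /e stern_odd // (lcD _ _ (@stern_pos m m0) (@stern_pos m.+1 (ltn0Sn m))).2.
have := @size_stern m m0; have := @size_stern m.+1 (ltn0Sn m); lia.
Qed.

Lemma e_diff n : 0 < n -> e n.+1 <= (e n).+1 /\ e n <= (e n.+1).+1.
Proof.
elim/ltn_ind: n => n IH n0.
case: (ltngtP n 1) => h; first lia; last first.
  by rewrite h -[2]/(1.*2) e_double // e1.
have hn := odd_double_half n; rewrite -muln2 in hn.
set m := n./2 in hn IH *.
case: (odd n) hn => /= hn.
- have [h1 h2] := IH m ltac:(lia) ltac:(lia).
  have -> : n = m.*2.+1 by rewrite -muln2; lia.
  have -> : m.*2.+2 = m.+1.*2 by [].
  rewrite e_double // e_odd; last lia.
  lia.
- have [h1 h2] := IH m ltac:(lia) ltac:(lia).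
  have -> : n = m.*2 by rewrite -muln2; lia.
  rewrite e_double ?e_odd; try lia.
Qed.

Lemma e_4p1 b : 0 < b -> e (4 * b + 1) = (e b).+1.
Proof.
move=> b0; have -> : 4 * b + 1 = (b.*2).*2.+1 by rewrite -!muln2; lia.
have [h1 h2] := @e_diff b b0.
rewrite e_odd; last by rewrite -muln2; lia.
rewrite e_double // e_odd //; lia.
Qed.

Lemma e_4p3 b : e (4 * b + 3) = (e b.+1).+1.
Proof.
have -> : 4 * b + 3 = (b.*2.+1).*2.+1 by rewrite -!muln2; lia.
rewrite e_odd // -[(b.*2.+1).+1]/(b.+1.*2) e_double //.
case: (posnP b) => [->|b0]; first by rewrite /= e1.
have [h1 h2] := @e_diff b b0.
rewrite e_odd //; lia.
Qed.

Lemma e_decomp a : 1 < a -> exists b, 0 < b /\ e a = (e b).+1 /\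
  (a = 2 * b \/ a = 4 * b - 1 \/ a = 4 * b + 1).
Proof.
move=> a1; have ha := odd_double_half a; rewrite -muln2 in ha.
set c := a./2 in ha *.
case: (odd a) ha => /= ha; last first.
  exists c; split; first lia; split; last lia.
  have -> : a = c.*2 by rewrite -muln2; lia.
  rewrite e_double //; lia.
have hc := odd_double_half c; rewrite -muln2 in hc.
set b := c./2 in hc *.
case: (odd c) hc => /= hc.
- exists b.+1; split; first lia; split; last lia.
  have -> : a = 4 * b + 3 by lia.
  by rewrite e_4p3.
- exists b; split; first lia; split; last lia.
  have -> : a = 4 * b + 1 by lia.
  by rewrite e_4p1 //; lia.
Qed.

Fixpoint L (n : nat) : seq nat :=
  if n is n'.+1 then
    [seq 2 * x | x <- L n'] ++ [seq 4 * x - 1 | x <- L n'] ++ [seq 4 * x + 1 | x <- L n']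
  else [:: 1].

Lemma L_bound n x : x \in L n -> 0 < x < 4 ^ n.+1.
Proof.
elim: n x => [|n IH] x /=; first by rewrite inE => /eqP ->.
rewrite !mem_cat => /or3P [] /mapP [y /IH hy ->]; rewrite expnS; lia.
Qed.

Lemma L_mem n a : 0 < a -> (e a == n) = (a \in L n).
Proof.
elim: n a => [|n IH] a a0 /=.
  rewrite inE; apply/eqP/eqP => [h|->]; last exact: e1.
  case: (ltngtP a 1) => // h1; first lia.
  by have [b [_ [hb _]]] := @e_decomp a h1; rewrite hb in h.
apply/eqP/idP => [h|].
- case: (ltngtP a 1) => h1; first lia; last by rewrite h1 e1 in h.
  have [b [b0 [hb hs]]] := @e_decomp a h1.
  have hbL : b \in L n by rewrite -IH //; rewrite h in hb; case: hb => ->.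
  rewrite !mem_cat; case: hs => [->|[->|->]].
  + by rewrite (map_f (fun x => 2 * x) hbL).
  + by rewrite (map_f (fun x => 4 * x - 1) hbL) orbT.
  + by rewrite (map_f (fun x => 4 * x + 1) hbL) !orbT.
- rewrite !mem_cat => /or3P [] /mapP [y hy ->]; have := @L_bound n y hy => hb;
  have := IH y ltac:(lia); rewrite hy => /eqP <-.
  + have -> : 2 * y = y.*2 by rewrite -muln2 mulnC.
    rewrite e_double //; lia.
  + have -> : 4 * y - 1 = 4 * y.-1 + 3 by lia.
    rewrite e_4p3; congr (e _).+1; lia.
  + by rewrite e_4p1 //; lia.
Qed.

Lemma L_uniq n : uniq (L n).
Proof.
elim: n => [|n IH] //=.
have pos := @L_bound n.
rewrite !cat_uniq !map_inj_in_uniq //; last 3 first.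
- move=> x y /pos hx /pos hy; lia.
- move=> x y /pos hx /pos hy; lia.
- move=> x y /pos hx /pos hy; lia.
rewrite IH /=; apply/and3P; split.
- apply/hasPn => z; rewrite mem_cat => /orP [] /mapP [y /pos hy ->];
  apply/mapP => [[x /pos hx]]; lia.
- apply/hasPn => z /mapP [y /pos hy ->]; apply/mapP => [[x /pos hx]]; lia.
- done.
Qed.

Lemma size_L n : size (L n) = 3 ^ n.
Proof. elim: n => [|n IH] //=; rewrite !size_cat !size_map IH expnS; lia. Qed.

Definition T k n := \sum_(x <- L n) x ^ k.

Lemma T_step k n : T k n.+1 = \sum_(x <- L n) ((2 * x) ^ k + (4 * x - 1) ^ k + (4 * x + 1) ^ k).
Proof. by rewrite /T /= !big_cat !big_map !big_split /= addnA. Qed.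

Lemma S_is_T k n : S_is k n (T k n).
Proof.
exists (4 ^ n.+1); split.
  by move=> a a0 /eqP; rewrite (@L_mem n a a0) => /L_bound /andP [].
rewrite -big_filter /T; apply: perm_big.
apply: uniq_perm; first by rewrite filter_uniq // iota_uniq.
  exact: L_uniq.
move=> a; rewrite mem_filter mem_iota.
case: (posnP a) => [->|a0].
  have -> : (0 \in L n) = false by apply/negP => /L_bound.
  by rewrite andbF.
rewrite (@L_mem n a a0); apply/andP/idP => [[//]|h]; split => //.
have := @L_bound n a h; lia.
Qed.

Lemma T1 n : T 1 n = 10 ^ n.
Proof.
elim: n => [|n IH]; first by rewrite /T /= big_seq1.
rewrite T_step expnS -IH /T big_distrr /=; apply: eq_big_seq => x /L_bound hx; lia.
Qed.

Lemma T0 n : T 0 n = 3 ^ n.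
Proof. by rewrite /T -size_L -sum1_size; apply: eq_bigr => x _; rewrite expn0. Qed.

Lemma T2 n : 33 * T 2 n + 2 * 3 ^ n = 35 * 36 ^ n.
Proof.
elim: n => [|n IH]; first by rewrite /T /= big_seq1.
have -> : T 2 n.+1 = 36 * T 2 n + 2 * T 0 n.
  rewrite T_step /T big_distrr big_distrr -big_split /=; apply: eq_big_seq => x /L_bound hx.
  have -> : 4 * x - 1 = 4 * x.-1 + 3 by lia.
  set y := x.-1; have -> : x = y.+1 by lia.
  rewrite !expnS !expn0; nia.
rewrite T0 !expnS; nia.
Qed.

Lemma T3 n : 21 * T 3 n + 4 * 10 ^ n = 25 * 136 ^ n.
Proof.
elim: n => [|n IH]; first by rewrite /T /= big_seq1.
have -> : T 3 n.+1 = 136 * T 3 n + 24 * T 1 n.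
  rewrite T_step /T big_distrr big_distrr -big_split /=; apply: eq_big_seq => x /L_bound hx.
  have -> : 4 * x - 1 = 4 * x.-1 + 3 by lia.
  set y := x.-1; have -> : x = y.+1 by lia.
  rewrite !expnS !expn0; nia.
rewrite T1 !expnS; nia.
Qed.

Theorem mainTheorem11 (n : nat) :
  S_is 1 n (10 ^ n) /\
  (exists v : nat, S_is 2 n v /\
     (v%:R : rat) = ((35 * 36 ^ n)%:R - (2 * 3 ^ n)%:R) / 33%:R)%R /\
  (exists v : nat, S_is 3 n v /\
     (v%:R : rat) = ((25 * 136 ^ n)%:R - (4 * 10 ^ n)%:R) / 21%:R)%R.
Proof.
split; first by rewrite -T1; apply: S_is_T.
split.
- exists (T 2 n); split; first exact: S_is_T.
  rewrite -T2 natrD addrK natrM [X in _ = (X / _)%R]mulrC mulfK //.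
- exists (T 3 n); split; first exact: S_is_T.
  rewrite -T3 natrD addrK natrM [X in _ = (X / _)%R]mulrC mulfK //.
Qed.
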